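(* Consider the allocation problem with $m$ divisible goods and $n$ agents as described in the context, and let $\pi=(\pi_1,\ldots,\pi_n)$ be the agents' true preference lists. Let $a^\pi$ be the allocation produced by the Synchronized Greedy (SG) mechanism when every agent $i$ bids $\pi_i$. Then for every allocation $a\neq a^\pi$ there exists an agent $i$ such that $a^\pi_{i*} >_i a_{i*}$.
   Context: There are $m$ distinct divisible goods; good $j$ ($1\le j\le m$) is available in amount $q_j>0$. There are $n$ agents; agent $i$ ($1\le i\le n$) is to receive a total of $r_i>0$. Assume $\sum_j q_j=\sum_i r_i$. An allocation is a family of numbers $a_{ij}\ge 0$ with $\sum_j a_{ij}=r_i$ for all $i$ and $\sum_i a_{ij}=q_j$ for all $j$; $a_{i*}=(a_{i1},\ldots,a_{im})$ is agent $i$'s share. Each agent $i$ has a true preference list $\pi_i$, a permutation of the goods ($\pi_i(1)$ is the most preferred good). Agent $i$ (lexicographically) prefers share $a_{i*}$ to $b_{i*}$, written $a_{i*}>_i b_{i*}$, if the leftmost nonzero coordinate of $(a_{i\pi_i(1)}-b_{i\pi_i(1)},\ldots,a_{i\pi_i(m)}-b_{i\pi_i(m)})$ is positive. The SG mechanism: each agent $i$ submits a bid $\sigma_i$, a permutation of the goods. The mechanism runs a continuous process over time $t\in[0,1]$: at each time, each agent $i$ receives, at rate $r_i$ per unit time, the good that is highest in $\sigma_i$ among the goods not yet exhausted (a good is exhausted once the total amount handed out equals its quantity $q_j$; several agents may receive the same good simultaneously, and whenever a good is exhausted all agents receiving it switch instantly to their next non-exhausted good in their bid). At time $1$ all goods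 are exhausted and all agents have their totals $r_i$; $a^\sigma_{ij}$ denotes the total amount of good $j$ received by agent $i$. *)

(* Defs.v *)
From HB Require Import structures.
From mathcomp Require Import all_boot all_order all_algebra all_fingroup.
From mathcomp Require Import reals.
Set Implicit Arguments. Unset Strict Implicit. Unset Printing Implicit Defensive.
Import Order.TTheory GRing.Theory Num.Theory.
Local Open Scope ring_scope.

(* Goods are 'I_m, agents are 'I_n (0-based).  A preference list / bid is a
   permutation p : {perm 'I_m}, where p k is the good ranked at position k
   (p 0 = most preferred). *)

Section SG.
Variables (R : realType) (n m : nat) (r : 'I_n -> R) (q : 'I_m -> R).
Variable sigma : 'I_n -> {perm 'I_m}.

Definition sg_cur (A : {set 'I_m}) (i : 'I_n) : option 'I_m :=
  ohead [seq sigma i k | k <- enum 'I_m & sigma i k \in A].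

Definition sg_rate (A : {set 'I_m}) (j : 'I_m) : R :=
  \sum_(i | sg_cur A i == Some j) r i.

Record sg_state := SGState {
  sg_time  : R;
  sg_alive : {set 'I_m};
  sg_rem   : 'I_m -> R;
  sg_alloc : 'I_n -> 'I_m -> R
}.

(* One phase of the continuous process: between two consecutive exhaustion
   events every agent receives a fixed good at rate r i. *)
Definition sg_step (s : sg_state) : sg_state :=
  let t := sg_time s in
  let A := sg_alive s in
  let rem := sg_rem s in
  let delta := \big[Num.min/(1 - t)]_(j in A | 0 < sg_rate A j)
                  (rem j / sg_rate A j) in
  SGState (t + delta)
    [set j in A | ~~ ((0 < sg_rate A j) && (rem j - delta * sg_rate A j == 0))]
    (fun j => if j \in A then rem j - delta * sg_rate A j else rem j)
    (fun i j => sg_alloc s i j + (if sg_cur A i == Some j then delta * r i else 0)).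

Definition sg_init : sg_state := SGState 0 setT q (fun _ _ => 0).

(* Each phase exhausts at least one good, so m phases run the process to
   time 1.  a^sigma_{ij} := SG_alloc i j. *)
Definition SG_alloc : 'I_n -> 'I_m -> R := sg_alloc (iter m sg_step sg_init).

Definition is_allocation (a : 'I_n -> 'I_m -> R) : Prop :=
  [/\ forall i j, 0 <= a i j,
      forall i, \sum_(j < m) a i j = r i
    & forall j, \sum_(i < n) a i j = q j].
End SG.

Definition lex_pref (R : realType) (m : nat) (p : {perm 'I_m})
    (x y : 'I_m -> R) : Prop :=
  exists k : 'I_m,
    (forall k' : 'I_m, (k' < k)%N -> x (p k') = y (p k')) /\ y (p k) < x (p k).

(* Main.v *)
Require Import Defs.
From HB Require Import structures.
From mathcomp Require Import all_boot all_order all_algebra all_fingroup.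
From mathcomp Require Import reals.
From Stdlib Require Import Classical_Prop.
Import Order.TTheory GRing.Theory Num.Theory.
Local Open Scope ring_scope.

Lemma ohead_filter_nth (T : eqType) (P : pred T) (s : seq T) x0 :
  has P s -> ohead [seq x <- s | P x] = Some (nth x0 s (find P s)).
Proof.
elim: s => [|y s IH] //=; case: ifP => Py //= Hs; by rewrite IH.
Qed.

Lemma ohead_filter_enum m (P : pred 'I_m) k0 :
  ohead [seq k <- enum 'I_m | P k] = Some k0 ->
  P k0 /\ forall k' : 'I_m, (k' < k0)%N -> ~~ P k'.
Proof.
move=> H.
have hP : has P (enum 'I_m).
  rewrite has_filter; apply/negP => /eqP E; by rewrite E in H.
have hf : (find P (enum 'I_m) < m)%N by rewrite -[X in (_ < X)%N]size_enum_ord -has_find.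
have Hk0 : k0 = nth k0 (enum 'I_m) (find P (enum 'I_m)).
  by move: H; rewrite (@ohead_filter_nth _ _ _ k0 hP) => -[].
have vk0 : val k0 = find P (enum 'I_m).
  by rewrite {1}Hk0 /= nth_enum_ord.
split.
  by rewrite Hk0; apply: nth_find.
move=> k' hk'.
have := before_find k0 (_ : (val k' < find P (enum 'I_m))%N).
rewrite -vk0 => /(_ hk').
have -> : nth k0 (enum 'I_m) k' = k' by apply: val_inj; rewrite /= nth_enum_ord.
by move=> ->.
Qed.

Section Proof.
Variables (R : realType) (n m : nat) (r : 'I_n -> R) (q : 'I_m -> R).
Variable pi : 'I_n -> {perm 'I_m}.
Hypothesis hr : forall i, 0 < r i.
Hypothesis hq : forall j, 0 < q j.
Hypothesis hsum : \sum_(j < m) q j = \sum_(i < n) r i.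

Let Rs := \sum_(i < n) r i.

Lemma cur_spec (A : {set 'I_m}) (i : 'I_n) (j : 'I_m) : sg_cur pi A i = Some j ->
  j \in A /\ exists k0, pi i k0 = j /\ forall k' : 'I_m, (k' < k0)%N -> pi i k' \notin A.
Proof.
rewrite /sg_cur.
case E: [seq k <- enum 'I_m | pi i k \in A] => [|k0 s] //= [<-].
have [h1 h2] := @ohead_filter_enum m (fun k => pi i k \in A) k0 ltac:(by rewrite E).
by split => //; exists k0.
Qed.

Lemma cur_some (A : {set 'I_m}) (i : 'I_n) (j0 : 'I_m) : j0 \in A -> exists j, sg_cur pi A i = Some j.
Proof.
move=> hj0; rewrite /sg_cur.
case E: [seq k <- enum 'I_m | pi i k \in A] => [|k0 s] /=; last by exists (pi i k0).
have : ((pi i)^-1 j0)%g \in [seq k <- enum 'I_m | pi i k \in A].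
  by rewrite mem_filter permKV hj0 mem_enum.
by rewrite E.
Qed.

Lemma rate_ge0 (A : {set 'I_m}) (j : 'I_m) : 0 <= sg_rate r pi A j.
Proof. by apply: sumr_ge0 => i _; apply: ltW. Qed.

Lemma rate_out (A : {set 'I_m}) (j : 'I_m) : j \notin A -> sg_rate r pi A j = 0.
Proof.
move=> hj; apply: big1 => i /eqP /cur_spec [hjA _].
by rewrite hjA in hj.
Qed.

Lemma sum_rate (A : {set 'I_m}) (j0 : 'I_m) : j0 \in A -> \sum_j sg_rate r pi A j = Rs.
Proof.
move=> hj0; rewrite /sg_rate.
under eq_bigr do rewrite big_mkcond.
rewrite exchange_big /=; apply: eq_bigr => i _.
have [j hj] := @cur_some A i j0 hj0.
rewrite (bigD1 j) //= hj eqxx big1 ?addr0 // => k hk.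
by rewrite (inj_eq Some_inj) eq_sym (negbTE hk).
Qed.

Definition delta (s : sg_state R n m) : R :=
  \big[Num.min/(1 - sg_time s)]_(j in sg_alive s | 0 < sg_rate r pi (sg_alive s) j)
     (sg_rem s j / sg_rate r pi (sg_alive s) j).

Lemma step_rem s j : sg_rem (sg_step r pi s) j =
  sg_rem s j - delta s * sg_rate r pi (sg_alive s) j.
Proof.
rewrite /sg_step /= -/(delta s); case: ifP => // hj.
by rewrite rate_out ?hj // mulr0 subr0.
Qed.

Lemma step_alloc s i j : sg_alloc (sg_step r pi s) i j =
  sg_alloc s i j + (if sg_cur pi (sg_alive s) i == Some j then delta s * r i else 0).
Proof. by []. Qed.

Lemma step_alive s : sg_alive (sg_step r pi s) =
  [set j in sg_alive s | ~~ ((0 < sg_rate r pi (sg_alive s) j) &&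
       (sg_rem s j - delta s * sg_rate r pi (sg_alive s) j == 0))].
Proof. by []. Qed.

Lemma step_time s : sg_time (sg_step r pi s) = sg_time s + delta s.
Proof. by []. Qed.

Lemma delta_le s j : j \in sg_alive s -> 0 < sg_rate r pi (sg_alive s) j ->
  delta s <= sg_rem s j / sg_rate r pi (sg_alive s) j.
Proof.
move=> hj hp; rewrite /delta.
by apply: bigmin_le_cond; rewrite hj hp.
Qed.

Lemma delta_cases s : delta s = 1 - sg_time s \/
  exists2 j, (j \in sg_alive s) && (0 < sg_rate r pi (sg_alive s) j) &
     delta s = sg_rem s j / sg_rate r pi (sg_alive s) j.
Proof.
rewrite /delta; apply: (big_ind (fun x => x = 1 - sg_time s \/ exists2 j,
   (j \in sg_alive s) && (0 < sg_rate r pi (sg_alive s) j) &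
     x = sg_rem s j / sg_rate r pi (sg_alive s) j)).
- by left.
- by move=> x y hx hy; rewrite minEle; case: ifP.
- by move=> j hj; right; exists j.
Qed.

Definition Inv (s : sg_state R n m) : Prop :=
  [/\ (forall j, j \notin sg_alive s -> sg_rem s j = 0),
      (forall j, 0 <= sg_rem s j),
      (forall j, \sum_i sg_alloc s i j + sg_rem s j = q j)
    & \sum_j sg_rem s j = (1 - sg_time s) * Rs].

Lemma inv_init : Inv (sg_init n q).
Proof.
split => /=.
- by move=> j; rewrite inE.
- by move=> j; exact: ltW.
- by move=> j; rewrite big1 ?add0r.
- by rewrite subr0 mul1r.
Qed.

Lemma inv_step s : Inv s -> Inv (sg_step r pi s).
Proof.
move=> [h1 h2 h3 h4]; split.
- move=> j; rewrite step_rem step_alive inE negb_and negbK.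
  case/orP => [hj | /andP [_ /eqP ->]] //.
  by rewrite rate_out // mulr0 subr0 h1.
- move=> j; rewrite step_rem.
  case: (boolP (j \in sg_alive s)) => hj; last by rewrite rate_out // mulr0 subr0.
  have := rate_ge0 (sg_alive s) j; rewrite le_eqVlt => /orP [/eqP <- | hpos].
    by rewrite mulr0 subr0.
  by rewrite subr_ge0 -ler_pdivlMr // (@delta_le s j hj hpos).
- move=> j; rewrite step_rem -(h3 j).
  under eq_bigr do rewrite step_alloc.
  rewrite big_split /= /sg_rate mulr_sumr [X in _ - X]big_mkcond /=.
  by rewrite addrACA subrr addr0.
- rewrite step_time.
  under eq_bigr do rewrite step_rem.
  rewrite sumrB -mulr_sumr.
  case: (set_0Vmem (sg_alive s)) => [E | [j0 hj0]].
    have hd : delta s = 1 - sg_time s.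
      by rewrite /delta big_pred0 // => j; rewrite E inE.
    have -> : \sum_j sg_rate r pi (sg_alive s) j = 0.
      by apply: big1 => j _; rewrite rate_out // E inE.
    rewrite mulr0 subr0.
    have -> : \sum_j sg_rem s j = 0 by apply: big1 => j _; apply: h1; rewrite E inE.
    have -> : sg_time s + delta s = 1 by rewrite hd addrCA subrr addr0.
    by rewrite subrr mul0r.
  by rewrite h4 (@sum_rate _ j0 hj0) -mulrBl opprD addrA.
Qed.

Lemma Rs_pos (j0 : 'I_m) : 0 < Rs.
Proof.
rewrite /Rs -hsum; apply: (lt_le_trans (hq j0)).
rewrite (bigD1 j0) //= lerDl sumr_ge0 // => j _; exact: ltW.
Qed.

Lemma progress s j0 : Inv s -> j0 \in sg_alive s ->
  (#|sg_alive (sg_step r pi s)| < #|sg_alive s|)%N.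
Proof.
move=> [h1 h2 h3 h4] hj0.
set A := sg_alive s.
set rt := sg_rate r pi A.
have hR := Rs_pos j0.
have [j /andP [hpos hle]] : exists j, (0 < rt j) && (sg_rem s j <= (1 - sg_time s) * rt j).
  apply/existsP; apply: contraT; rewrite negb_exists => /forallP hno.
  set F := fun j => sg_rem s j - (1 - sg_time s) * rt j.
  have hF : forall j, 0 <= F j.
    move=> j; have := hno j; rewrite negb_and -ltNge.
    have := (rate_ge0 A j : 0 <= rt j); rewrite le_eqVlt => /orP [/eqP E _ | hp].
      by rewrite /F -E mulr0 subr0.
    by rewrite hp /= => hl; rewrite /F subr_ge0 ltW.
  have hs : \sum_j F j = 0.
    by rewrite /F sumrB -mulr_sumr h4 (@sum_rate _ j0 hj0) subrr.
  have [j hj] : exists j, 0 < rt j.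
    apply/existsP; apply: contraT; rewrite negb_exists => /forallP hn.
    have : \sum_j rt j <= 0.
      by apply: sumr_le0 => j _; rewrite leNgt; apply: hn.
    by rewrite (@sum_rate _ j0 hj0) leNgt hR.
  have := psumr_eq0P (fun j _ => hF j) hs (i := j) isT.
  move/eqP; rewrite /F subr_eq0 => /eqP E.
  by move: (hno j); rewrite hj E lexx.
have hjA : j \in A.
  by apply: contraTT hpos => hn; rewrite /rt rate_out // ltxx.
have [k hk hrem] : exists2 k, k \in A &
   (0 < rt k) && (sg_rem s k - delta s * rt k == 0).
  case: (delta_cases s) => [hd | [k /andP [hkA hkp] hd]].
    exists j => //; rewrite hpos /=.
    have E : delta s = sg_rem s j / rt j.
      apply/eqP; rewrite eq_le (@delta_le s j hjA hpos) hd.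
      by rewrite ler_pdivrMr // mulrC.
    by rewrite E divfK ?subrr // gt_eqF.
  exists k => //; rewrite hkp /= hd divfK ?subrr // gt_eqF //.
apply: proper_card; apply/properP; split.
  by apply/subsetP => x; rewrite step_alive inE => /andP [].
by exists k => //; rewrite step_alive inE hk /= hrem.
Qed.

Definition st k := iter k (sg_step r pi) (sg_init n q).

Lemma inv_all k : Inv (st k).
Proof. elim: k => [|k IH]; [exact: inv_init | exact: inv_step]. Qed.

Lemma term k : sg_alive (st k) = set0 \/ (#|sg_alive (st k)| + k <= m)%N.
Proof.
elim: k => [|k IH].
  by right; rewrite addn0 /st /= cardsT card_ord.
case: (set_0Vmem (sg_alive (st k))) => [E | [j0 hj0]].
  left; apply/eqP; rewrite -subset0 -E.
  by apply/subsetP => x; rewrite /st iterS step_alive inE => /andP [].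
right; case: IH => [E|IH]; first by rewrite E inE in hj0.
have := @progress (st k) j0 (inv_all k) hj0.
rewrite /st iterS -/(st k) => h.
by rewrite addnS; apply: leq_trans IH; rewrite ltn_add2r.
Qed.

Lemma alive_m : sg_alive (st m) = set0.
Proof.
case: (term m) => // h; apply/eqP; rewrite -cards_eq0.
have : (#|sg_alive (st m)| <= 0)%N by rewrite -(leq_add2r m) add0n.
by rewrite leqn0.
Qed.

Lemma alive_mono k d : sg_alive (st (k + d)) \subset sg_alive (st k).
Proof.
elim: d => [|d IH]; first by rewrite addn0.
apply: subset_trans IH; rewrite addnS /st iterS step_alive.
by apply/subsetP => x; rewrite inE => /andP [].
Qed.

Lemma alive_mono' k1 k2 : (k1 <= k2)%N -> sg_alive (st k2) \subset sg_alive (st k1).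
Proof. by move=> h; rewrite -(subnKC h); apply: alive_mono. Qed.

Lemma alloc_cur k i j : sg_alloc (st k) i j != 0 ->
  exists2 s, (s < k)%N & sg_cur pi (sg_alive (st s)) i = Some j.
Proof.
elim: k => [|k IH]; first by rewrite /st /= eqxx.
rewrite /st iterS step_alloc -/(st k).
case hc: (sg_cur pi (sg_alive (st k)) i == Some j).
  by move=> _; exists k => //; apply/eqP.
rewrite addr0 => /IH [s hs hc2]; exists s => //; exact: ltnW.
Qed.

Lemma col_sum j : \sum_i SG_alloc r q pi i j = q j.
Proof.
have [h1 _ h3 _] := inv_all m.
rewrite -(h3 j) (h1 j) ?addr0 //.
by rewrite alive_m inE.
Qed.

Lemma main_sec (a : 'I_n -> 'I_m -> R) : is_allocation r q a ->
  ~ (forall i j, a i j = SG_alloc r q pi i j) ->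
  exists i : 'I_n, lex_pref (pi i) (SG_alloc r q pi i) (a i).
Proof.
move=> [ha0 _ hacol] hne; apply: NNPP => hno.
have hno' : forall i, ~ lex_pref (pi i) (SG_alloc r q pi i) (a i).
  by move=> i hi; apply: hno; exists i.
have P : forall k g, g \notin sg_alive (st k) -> forall i, a i g = SG_alloc r q pi i g.
  elim=> [|k IH] g hg.
    by move: hg; rewrite /st /= inE.
  have hle : forall i, SG_alloc r q pi i g <= a i g.
    move=> i; rewrite leNgt; apply/negP => hlt.
    have hnz : sg_alloc (st m) i g != 0.
      by rewrite gt_eqF // (le_lt_trans (ha0 i g) hlt).
    have [s hs hc] := @alloc_cur m i g hnz.
    have [hgs [k0 [hk0 hbef]]] := @cur_spec _ i g hc.
    have hsk : (s <= k)%N.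
      rewrite leqNgt; apply/negP => hks.
      have := subsetP (@alive_mono' _ _ hks) g hgs.
      by rewrite (negbTE hg).
    apply: (hno' i); exists k0; split.
      move=> k' hk'; symmetry; apply: IH.
      apply: contra (hbef k' hk') => hin.
      exact: (subsetP (@alive_mono' _ _ hsk)).
    by rewrite hk0.
  move=> i.
  have hs : \sum_i (a i g - SG_alloc r q pi i g) = 0.
    by rewrite sumrB hacol col_sum subrr.
  have hnn : forall i, true -> 0 <= a i g - SG_alloc r q pi i g.
    by move=> i' _; rewrite subr_ge0 hle.
  have := @psumr_eq0P _ _ xpredT (fun i => a i g - SG_alloc r q pi i g) hnn hs i isT.
  by move/eqP; rewrite subr_eq0 => /eqP.
apply: hne => i j; apply: (P m).
by rewrite alive_m inE.
Qed.

End Proof.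

Theorem theorem1 (R : realType) (n m : nat) (r : 'I_n -> R) (q : 'I_m -> R)
    (pi : 'I_n -> {perm 'I_m}) :
  (forall i, 0 < r i) -> (forall j, 0 < q j) ->
  \sum_(j < m) q j = \sum_(i < n) r i ->
  forall a : 'I_n -> 'I_m -> R,
    is_allocation r q a ->
    ~ (forall i j, a i j = SG_alloc r q pi i j) ->
    exists i : 'I_n, lex_pref (pi i) (SG_alloc r q pi i) (a i).
Proof.
move=> hr hq hsum a ha hne.
exact: (@main_sec R n m r q pi hr hq hsum a ha hne).
Qed.
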